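(* Let $m$ be a non-zero integer and $n$ any integer. Then \[ \sum_{k = 1}^n L_{mk}^{\,4} = \frac{F_{2mn+m}\left(L_{2mn + m} + 4( - 1)^{mn} L_m \right)}{F_{2m}} + 6n-5\,. \]
   Context: $F_i$ and $L_i$ denote the Fibonacci and Lucas numbers, defined for all $i\in\mathbb{Z}$ by $F_i=F_{i-1}+F_{i-2}$, $F_0=0$, $F_1=1$, and $L_i=L_{i-1}+L_{i-2}$, $L_0=2$, $L_1=1$; equivalently $F_{-i}=(-1)^{i-1}F_i$ and $L_{-i}=(-1)^iL_i$. Summation convention for an arbitrary integer upper limit: $\sum_{k=a}^{a-1} f(k)=0$, and for $n<a-1$, $\sum_{k=a}^{n} f(k) = -\sum_{k=n+1}^{a-1} f(k)$. *)

(* Defs.v *)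
From mathcomp Require Import all_boot all_order all_algebra.
Set Implicit Arguments. Unset Strict Implicit. Unset Printing Implicit Defensive.
Import Order.TTheory GRing.Theory Num.Theory.
Local Open Scope ring_scope.

Fixpoint fibpair (n : nat) : int * int :=  (* (F_n, F_{n+1}) *)
  match n with
  | 0%N => (0, 1)
  | S p => let: (a, b) := fibpair p in (b, a + b)
  end.

Fixpoint lucpair (n : nat) : int * int :=  (* (L_n, L_{n+1}) *)
  match n with
  | 0%N => (2, 1)
  | S p => let: (a, b) := lucpair p in (b, a + b)
  end.

Definition fibn (n : nat) : int := (fibpair n).1.
Definition lucn (n : nat) : int := (lucpair n).1.

(* Extension to all integers: F_{-i} = (-1)^(i-1) F_i, L_{-i} = (-1)^i L_i *)
Definition fib (z : int) : int :=
  match z with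
  | Posz n => fibn n
  | Negz n => (-1) ^+ n * fibn n.+1   (* z = -(n+1) *)
  end.

Definition luc (z : int) : int :=
  match z with
  | Posz n => lucn n
  | Negz n => (-1) ^+ n.+1 * lucn n.+1
  end.

(* Sum over k = a..n for arbitrary integer n, with the convention
   sum_{k=a}^{a-1} = 0 and sum_{k=a}^{n} = - sum_{k=n+1}^{a-1} for n < a-1. *)
Definition sumZ (a n : int) (f : int -> int) : int :=
  if (a - 1 <= n)%R then
    \sum_(0 <= j < absz (n - a + 1)%R) f (a + j%:Z)
  else
    - \sum_(0 <= j < absz (a - 1 - n)%R) f (n + 1 + j%:Z).

(* Main.v *)
Require Import Defs.
From mathcomp Require Import all_boot all_order all_algebra all_field.
From mathcomp Require Import ring.
Import Order.TTheory GRing.Theory Num.Theory.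
Local Open Scope ring_scope.

Lemma fibnS n : fibn n.+2 = fibn n + fibn n.+1.
Proof. by rewrite /fibn /=; case: (fibpair n). Qed.
Lemma lucnS n : lucn n.+2 = lucn n + lucn n.+1.
Proof. by rewrite /lucn /=; case: (lucpair n). Qed.

Definition r5 : algC := sqrtC 5.
Definition phi : algC := (1 + r5) / 2.
Definition psi : algC := (1 - r5) / 2.

Lemma r5sq : r5 ^+ 2 = 5. Proof. exact: sqrtCK. Qed.
Lemma r5n0 : r5 != 0. Proof. by rewrite /r5 sqrtC_eq0 pnatr_eq0. Qed.
Lemma phipsi : phi * psi = -1.
Proof. rewrite /phi /psi. have := r5sq. move=> h.
rewrite (_ : (1 + r5) / 2 * ((1 - r5) / 2) = (1 - r5 ^+ 2) / 4); last by field.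
by rewrite h; field. Qed.
Lemma phi2 : phi ^+ 2 = phi + 1.
Proof. rewrite /phi. rewrite (_ : ((1 + r5) / 2) ^+ 2 = (1 + 2 * r5 + r5^+2) / 4); last by field.
by rewrite r5sq; field. Qed.
Lemma psi2 : psi ^+ 2 = psi + 1.
Proof. rewrite /psi. rewrite (_ : ((1 - r5) / 2) ^+ 2 = (1 - 2 * r5 + r5^+2) / 4); last by field.
by rewrite r5sq; field. Qed.
Lemma phin0 : phi != 0.
Proof. apply/eqP => h; have := phipsi; rewrite h mul0r => /eqP; by rewrite eq_sym oppr_eq0 oner_eq0. Qed.
Lemma phipsir : phi - psi = r5.
Proof. by rewrite /phi /psi; field. Qed.

Lemma binet_n n : (fibn n)%:~R = (phi ^+ n - psi ^+ n) / r5 /\ (lucn n)%:~R = phi ^+ n + psi ^+ n.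
Proof.
suff: [/\ (fibn n)%:~R = (phi ^+ n - psi ^+ n) / r5 , (lucn n)%:~R = phi ^+ n + psi ^+ n,
  (fibn n.+1)%:~R = (phi ^+ n.+1 - psi ^+ n.+1) / r5 & (lucn n.+1)%:~R = phi ^+ n.+1 + psi ^+ n.+1].
  by case.
elim: n => [|n [h1 h2 h3 h4]].
  split; rewrite /fibn /lucn /= ?expr0 ?expr1 ?subrr ?mul0r //.
  - by rewrite phipsir mulfV ?r5n0.
  - by rewrite /phi /psi; field.
split => //.
- rewrite fibnS intrD h1 h3 !exprS. rewrite (_ : phi * (phi * phi ^+ n) = phi ^+ 2 * phi ^+ n); last by ring. rewrite (_ : psi * (psi * psi ^+ n) = psi ^+ 2 * psi ^+ n); last by ring. rewrite phi2 psi2; field; exact: r5n0.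
- rewrite lucnS intrD h2 h4 !exprS. rewrite (_ : phi * (phi * phi ^+ n) = phi ^+ 2 * phi ^+ n); last by ring. rewrite (_ : psi * (psi * psi ^+ n) = psi ^+ 2 * psi ^+ n); last by ring. rewrite phi2 psi2; ring.
Qed.
Lemma phiV : phi^-1 = - psi.
Proof. apply: (mulfI phin0); rewrite mulfV ?phin0 // mulrN phipsi opprK //. Qed.
Lemma psin0 : psi != 0.
Proof. apply/eqP => h; have := phipsi; rewrite h mulr0 => /eqP; by rewrite eq_sym oppr_eq0 oner_eq0. Qed.
Lemma psiV : psi^-1 = - phi.
Proof. apply: (mulfI psin0); rewrite mulfV ?psin0 // mulrN mulrC phipsi opprK //. Qed.

Lemma binet_fib z : (fib z)%:~R = (phi ^ z - psi ^ z) / r5.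
Proof.
case: z => n /=; first by case: (binet_n n).
rewrite NegzE -!exprz_inv phiV psiV.
rewrite -!exprnP.
rewrite (exprNn psi) (exprNn phi).
rewrite intrM rmorphXn /= rmorphN1.
case: (binet_n n.+1) => -> _.
rewrite !exprS.
field; exact: r5n0.
Qed.
Lemma binet_luc z : (luc z)%:~R = phi ^ z + psi ^ z.
Proof.
case: z => n /=; first by case: (binet_n n).
rewrite NegzE -!exprz_inv phiV psiV.
rewrite -!exprnP.
rewrite (exprNn psi) (exprNn phi).
rewrite intrM rmorphXn /= rmorphN1.
case: (binet_n n.+1) => _ ->.
ring.
Qed.

Lemma tele_aux (R : comRingType) (f : int -> int) (S : int -> R) :
  (forall k, S (k+1) - S k = (f (k+1))%:~R) ->
  forall N p, (\sum_(0 <= j < N) f (p + 1 + j%:Z))%:~R = S (p + N%:Z) - S p.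
Proof.
move=> hS; elim=> [|N IH] p.
  by rewrite big_geq // addr0 subrr.
rewrite big_nat_recr //= rmorphD /= IH.
have -> : p + 1 + N%:Z = p + N%:Z + 1 by ring.
rewrite -hS (_ : p + N.+1%:Z = p + N%:Z + 1); last by rewrite -addn1 PoszD addrA.
ring.
Qed.

Lemma sumZ_tele (R : comRingType) (f : int -> int) (S : int -> R) :
  S 0 = 0 -> (forall k, S (k+1) - S k = (f (k+1))%:~R) ->
  forall n, (sumZ 1 n f)%:~R = S n.
Proof.
move=> h0 hS n; rewrite /sumZ subrr.
case: n => N /=.
  have -> : absz (N%:Z - 1 + 1) = N by rewrite subrK.
  rewrite (eq_bigr (fun j => f (0 + 1 + j%:Z))); last by move=> j _; rewrite add0r.
  by rewrite (tele_aux _ _ _ hS) add0r h0 subr0.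
rewrite add0n.
rewrite rmorphN /= (tele_aux _ _ _ hS).
have -> : Negz N + N.+1%:Z = 0 by rewrite NegzE addNr.
by rewrite h0 sub0r opprK.
Qed.

Definition Tf {F : fieldType} (r a c s t K : F) :=
  ((c*c*a - (t*t*s)/(c*c*a))/r) * ((c*c*a + (t*t*s)/(c*c*a)) + 4*t*(a + s/a))
   / ((a*a - (s*s)/(a*a))/r) + 6*K - 5.

Lemma Tf_step (F : fieldType) (r a c s t K : F) :
  (s = 1 \/ s = -1) -> (t = 1 \/ t = -1) -> r != 0 -> a != 0 -> c != 0 ->
  (a*a - (s*s)/(a*a))/r != 0 ->
  Tf r a (c*a) s (t*s) (K+1) - Tf r a c s t K = (c*a + (t*s)/(c*a))^+4.
Proof.
move=> hs ht hr ha hc hd.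
have hd' : a*a*a*a - s*s != 0.
  apply: contraNneq hd => e.
  rewrite (_ : (a * a - s * s / (a * a)) / r = (a*a*a*a - s*s) / (a*a*r)); last by field; rewrite hr ha.
  by rewrite e mul0r.
have hss : s * s = 1 by case: hs => ->; rewrite ?mulr1 ?mulrNN ?mulr1.
have h4 : a*a*(a*a) - 1 != 0 by rewrite -hss mulrA.
rewrite /Tf.
case: hs => ->; case: ht => ->; field; by rewrite ha hc hr h4.
Qed.
Lemma Tf_zero (F : fieldType) (r a s : F) :
  (s = 1 \/ s = -1) -> r != 0 -> a != 0 -> (a*a - (s*s)/(a*a))/r != 0 ->
  Tf r a 1 s 1 0 = 0.
Proof.
move=> hs hr ha hd.
have hss : s * s = 1 by case: hs => ->; rewrite ?mulr1 ?mulrNN ?mulr1.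
have h4 : a*a*(a*a) - 1 != 0.
  apply: contraNneq hd => e.
  rewrite hss (_ : (a * a - 1 / (a * a)) / r = (a*a*(a*a) - 1) / (a*a*r)); last by field; rewrite hr ha.
  by rewrite e mul0r.
rewrite /Tf.
case: hs => ->; field; by rewrite ha hr h4.
Qed.

Lemma fibn_pos n : 0 < fibn n.+1 /\ 0 <= fibn n.
Proof.
elim: n => [|n [h1 h2]]; first by [].
split; last exact: ltW.
by rewrite fibnS ltr_wpDl.
Qed.

Lemma fib_neq0 z : z != 0 -> fib z != 0.
Proof.
case: z => n /=.
  case: n => // n _; by case: (fibn_pos n) => /lt0r_neq0.
move=> _; rewrite mulf_neq0 ?signr_eq0 //; by case: (fibn_pos n) => /lt0r_neq0.
Qed.

Lemma sign1 (z : int) : (-1 : algC) ^ z = 1 \/ (-1 : algC) ^ z = -1.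
Proof.
rewrite expN1r -signr_odd; case: (odd _); rewrite ?expr0 ?expr1; by [left|right].
Qed.

Lemma psiz z : psi ^ z = (-1) ^ z / phi ^ z.
Proof. have -> : psi = -1 * phi^-1 by rewrite phiV mulN1r opprK.
by rewrite expfzMl exprz_inv -invr_expz. Qed.

Lemma fibE z : (fib z)%:~R = (phi ^ z - (-1) ^ z / phi ^ z) / r5.
Proof. by rewrite binet_fib psiz. Qed.
Lemma lucE z : (luc z)%:~R = phi ^ z + (-1) ^ z / phi ^ z.
Proof. by rewrite binet_luc psiz. Qed.

Definition Sf (m k : int) : algC :=
  (fib (2* m* k+m))%:~R * ((luc (2* m* k+m))%:~R + 4 * (-1)^(m* k) * (luc m)%:~R)
   / (fib (2* m))%:~R + 6 * k%:~R - 5.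

Lemma m1n0 : (-1 : algC) != 0. Proof. by rewrite oppr_eq0 oner_eq0. Qed.

Lemma SfE m k : Sf m k = Tf r5 (phi^m) (phi^(m* k)) ((-1)^m) ((-1)^(m* k)) (k%:~R).
Proof.
rewrite /Sf /Tf !fibE !lucE.
rewrite (_ : 2* m* k+m = m* k + m* k + m); last by ring.
rewrite (_ : 2* m = m + m); last by ring.
by rewrite !(expfzDr _ _ phin0) !(expfzDr _ _ m1n0).
Qed.

Lemma den_n0 m : m != 0 ->
  (phi^m * phi^m - ((-1)^m * (-1)^m)/(phi^m * phi^m)) / r5 != 0.
Proof.
move=> hm.
have : (fib (2* m))%:~R != 0 :> algC by rewrite intr_eq0 fib_neq0 // mulf_neq0.
rewrite fibE (_ : 2* m = m + m); last by ring.
by rewrite !(expfzDr _ _ phin0) !(expfzDr _ _ m1n0).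
Qed.

Lemma Sf_step m k : m != 0 ->
  Sf m (k+1) - Sf m k = ((luc (m * (k+1)) ^+ 4)%:~R).
Proof.
move=> hm.
rewrite !SfE rmorphXn /= lucE mulrDr mulr1 rmorphD /= rmorph1.
rewrite !(expfzDr _ _ phin0) !(expfzDr _ _ m1n0).
apply: Tf_step; rewrite ?expfz_neq0 ?phin0 ?r5n0 ?den_n0 //; exact: sign1.
Qed.

Lemma Sf0 m : m != 0 -> Sf m 0 = 0.
Proof.
move=> hm; rewrite SfE mulr0 !expr0z.
apply: Tf_zero; rewrite ?expfz_neq0 ?phin0 ?r5n0 ?den_n0 //; exact: sign1.
Qed.

Theorem theorem2 (m n : int) (hm : m != 0) :
  ((sumZ 1 n (fun k => luc (m * k) ^+ 4))%:~R : rat) =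
    (fib (2 * m * n + m))%:~R
      * ((luc (2 * m * n + m))%:~R + 4 * (-1 : rat) ^ (m * n) * (luc m)%:~R)
      / (fib (2 * m))%:~R
    + 6 * n%:~R - 5.
Proof.
apply: (fmorph_inj (@ratr algC)).
rewrite rmorph_int (@sumZ_tele _ _ (Sf m)) ?Sf0 //; last by move=> k; exact: Sf_step.
rewrite /Sf.
rewrite !rmorphB !rmorphD !rmorphM /= fmorphV /= !rmorph_int.
rewrite !rmorphD !rmorphM /= !rmorph_int !rmorph1 rmorph_nat.
rewrite fmorphXz rmorphN1.
ring.

Qed.
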